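(* Let $(f_n)_{n\in\mathbb{N}}$ be a family of polynomials over $\mathbb{C}$, $f_n$ in $n$ variables, of degree at most $\mathrm{poly}(n)$, such that $f_n$ has a constant-free arithmetic circuit of size at most $\mathrm{poly}(n)$. Then $f_n$ has a constant-free almost-MD arithmetic circuit of size at most $\mathrm{poly}(n)$.
   Context: An arithmetic circuit has input nodes labeled by variables or constants and internal addition and multiplication gates (fan-in two for multiplication); size is the number of edges/gates. It is constant-free if its only constant inputs are $0,1,-1$. A gate $v$ is constant producing if every input node of the subcircuit rooted at $v$ is a field constant. A circuit is almost-MD if every multiplication gate either multiplies two disjoint subcircuits or has at least one child that is constant producing. *)

(* Defs.v *)
From mathcomp Require Import all_boot all_algebra.
From mathcomp Require Import Rstruct.
From mathcomp Require Import complex.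
From mathcomp Require Import mpoly.
Import GRing.Theory.

Set Implicit Arguments. Unset Strict Implicit. Unset Printing Implicit Defensive.
Local Open Scope ring_scope.

Definition CC : fieldType := complex Rdefinitions.R.

(* Total degree of a multivariate polynomial (degree of 0 is 0). *)
Definition mdegree (n : nat) (p : {mpoly CC[n]}) : nat := (msize p).-1.

(* Children are referred to by their (nat) index in the circuit, which must be
   strictly smaller than the index of the gate (topological order). *)
Inductive gate (n : nat) : Type :=
| GVar of 'I_n
| GConst of CC
| GAdd of seq nat
| GMul of nat & nat.

(* A circuit is the list of its gates in topological order; the output is the
   last gate. *)
Definition circuit (n : nat) := seq (gate n).

Definition gate_at n (c : circuit n) (i : nat) : gate n := nth (GConst n 0) c i.

Definition children n (g : gate n) : seq nat :=
  match g with
  | GVar _ | GConst _ => [::]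
  | GAdd s => s
  | GMul a b => [:: a; b]
  end.

Definition well_formed n (c : circuit n) : bool :=
  (0 < size c)%N &&
  all (fun i => all (fun j => (j < i)%N) (children (gate_at c i))) (iota 0 (size c)).

Definition csize n (c : circuit n) : nat :=
  (size c + \sum_(g <- c) size (children g))%N.

Definition gate_val n (vals : seq {mpoly CC[n]}) (g : gate n) : {mpoly CC[n]} :=
  match g with
  | GVar i => 'X_i
  | GConst a => a%:MP
  | GAdd s => \sum_(j <- s) nth 0 vals j
  | GMul a b => nth 0 vals a * nth 0 vals b
  end.

Definition circuit_vals n (c : circuit n) : seq {mpoly CC[n]} :=
  foldl (fun vals g => rcons vals (gate_val vals g)) [::] c.

Definition output n (c : circuit n) : {mpoly CC[n]} :=
  nth 0 (circuit_vals c) (size c).-1.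

Definition computes n (c : circuit n) (f : {mpoly CC[n]}) : Prop :=
  well_formed c /\ output c = f.

Definition constant_free n (c : circuit n) : Prop :=
  forall i, (i < size c)%N -> forall a, gate_at c i = GConst n a ->
    a = 0 \/ a = 1 \/ a = -1.

(* j is a node of the subcircuit rooted at v (reflexive-transitive closure of
   the child relation). *)
Fixpoint in_sub_fuel n (c : circuit n) (fuel v j : nat) : bool :=
  match fuel with
  | 0 => false
  | S f => (j == v) || has (fun k => in_sub_fuel c f k j) (children (gate_at c v))
  end.

(* in a well-formed circuit children have smaller indices, so fuel v.+1 suffices *)
Definition in_sub n (c : circuit n) (v j : nat) : bool := in_sub_fuel c v.+1 v j.

Definition is_var n (g : gate n) : bool := if g is GVar _ then true else false.

Definition constant_producing n (c : circuit n) (v : nat) : Prop :=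
  forall j, in_sub c v j -> ~~ is_var (gate_at c j).

Definition disjoint_sub n (c : circuit n) (a b : nat) : Prop :=
  forall j, in_sub c a j -> in_sub c b j -> False.

Definition almost_MD n (c : circuit n) : Prop :=
  forall v a b, (v < size c)%N -> gate_at c v = GMul n a b ->
    disjoint_sub c a b \/ constant_producing c a \/ constant_producing c b.

(* Main.v *)
Require Import Defs.
From mathcomp Require Import all_boot all_algebra.
From mathcomp Require Import mpoly.
From mathcomp Require Import zify ring.
Import GRing.Theory.
Set Implicit Arguments. Unset Strict Implicit. Unset Printing Implicit Defensive.

Module M1.
Import GRing.Theory.
Local Open Scope ring_scope.

Section Gen.
Variable n : nat.
Implicit Types (c : circuit n).

Lemma cvals_rcons c g : circuit_vals (rcons c g) = rcons (circuit_vals c) (gate_val (circuit_vals c) g).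
Proof. by rewrite /circuit_vals foldl_rcons. Qed.

Lemma size_cvals c : size (circuit_vals c) = size c.
Proof.
elim/last_ind: c => [//|c g IH]; by rewrite cvals_rcons !size_rcons IH.
Qed.

Lemma cvals_take c p : circuit_vals (take p c) = take p (circuit_vals c).
Proof.
elim/last_ind: c p => [|c g IH] p; first by [].
rewrite cvals_rcons -!cats1 !take_cat size_cvals.
case: ltnP => hp; first by rewrite IH.
case: (p - size c)%N => [|m] /=.
  by rewrite !cats0.
by rewrite !cats1 cvals_rcons.
Qed.

Lemma gate_val_ext (s s' : seq {mpoly CC[n]}) g :
  (forall j, j \in children g -> nth 0 s j = nth 0 s' j) -> gate_val s g = gate_val s' g.
Proof.
case: g => [x|a|l|a b] /= H //.
  by apply: eq_big_seq => j /H.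
by rewrite !H // !inE eqxx ?orbT.
Qed.

Lemma cvals_nth c p : (p < size c)%N ->
  nth 0 (circuit_vals c) p = gate_val (take p (circuit_vals c)) (gate_at c p).
Proof.
move=> hp.
have -> : nth 0 (circuit_vals c) p = nth 0 (take p.+1 (circuit_vals c)) p by rewrite nth_take.
rewrite -cvals_take (take_nth (GConst n 0)) // cvals_rcons nth_rcons size_cvals size_take hp ltnn eqxx.
by rewrite cvals_take.
Qed.

Definition cwf c := forall p, (p < size c)%N -> forall j, j \in children (gate_at c p) -> (j < p)%N.

Lemma cvals_step c p : cwf c -> (p < size c)%N ->
  nth 0 (circuit_vals c) p = gate_val (circuit_vals c) (gate_at c p).
Proof.
move=> hw hp; rewrite cvals_nth //; apply: gate_val_ext => j hj.
by rewrite nth_take // (hw p).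
Qed.

Lemma well_formedP c : well_formed c -> cwf c.
Proof.
case/andP=> _ /allP H p hp j hj.
have := H p; rewrite mem_iota add0n hp => /(_ isT) /allP; exact.
Qed.

End Gen.

End M1.
Import M1.
Module M2.
Import GRing.Theory.

Section Lab.
Variable n : nat.
Variable c : circuit n.
Variables dg off : nat -> nat.
Definition lab_le (q p : nat) := [/\ (dg q <= dg p)%N, (off p <= off q)%N &
   (off q + maxn (dg q) 1 <= off p + maxn (dg p) 1)%N].
Hypothesis H1 : forall p j, j \in children (gate_at c p) -> lab_le j p.
Hypothesis H2 : forall p, is_var (gate_at c p) -> (0 < dg p)%N.
Hypothesis H3 : forall p a b, gate_at c p = GMul n a b ->
  dg a = 0%N \/ dg b = 0%N \/ (off a + dg a <= off b)%N.

Lemma in_sub_fuel_lab f v j : in_sub_fuel c f v j -> lab_le j v.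
Proof.
elim: f v => [//|f IH] v /= /orP [/eqP ->|/hasP [k hk /IH [h1 h2 h3]]].
  by split.
case: (H1 hk) => h4 h5 h6; split.
- exact: leq_trans h4.
- exact: leq_trans h2.
- exact: leq_trans h6.
Qed.

Lemma in_sub_lab v j : in_sub c v j -> lab_le j v.
Proof. exact: in_sub_fuel_lab. Qed.

Lemma cp_lab v : dg v = 0%N -> constant_producing c v.
Proof.
move=> h0 j /in_sub_lab [h _ _]; apply/negP => /H2; by rewrite h0 in h; case: (dg j) h.
Qed.

Lemma almost_MD_lab : almost_MD c.
Proof.
move=> v a b _ hv; case: (H3 hv) => [h|[h|h]].
- by right; left; apply: cp_lab.
- by right; right; apply: cp_lab.
case: (posnP (dg a)) => ha; first by right; left; apply: cp_lab.
case: (posnP (dg b)) => hb; first by right; right; apply: cp_lab.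
left => j /in_sub_lab [_ ja1 ja2] /in_sub_lab [_ jb1 jb2].
move: ja2; rewrite (maxn_idPl ha).
have : (off j + 1 <= off j + maxn (dg j) 1)%N by rewrite leq_add2l leq_maxr.
move=> h4 h5; have := leq_trans h4 h5.
move: h jb1; clear; lia.
Qed.
End Lab.

End M2.
Import M2.
Module M3.
Import GRing.Theory.
Local Open Scope ring_scope.

Section Hom.
Variable n : nat.
Implicit Types p q : {mpoly CC[n]}.
Notation comp i p := (pihomog mdeg i p).

Lemma pihomog_homM a b p q i :
  comp i (comp a p * comp b q) = if (a + b == i)%N then comp a p * comp b q else 0.
Proof.
have h : comp a p * comp b q \is (a + b)%N.-homog by apply: dhomogM; apply: pihomogP.
case: eqP => [<-|ne]; first by rewrite pihomog_dE.
by apply: (pihomog_ne0 _ h); apply/eqP.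
Qed.

Lemma pihomogM i p q :
  comp i (p * q) = \sum_(j < i.+1) comp j p * comp (i - j)%N q.
Proof.
pose K := (msize p + msize q + i).+1.
rewrite {1}(pihomog_partitionE (k:=K) (mf:=mdeg) (p:=p)); last by rewrite /K; lia.
rewrite {1}(pihomog_partitionE (k:=K) (mf:=mdeg) (p:=q)); last by rewrite /K; lia.
rewrite big_distrl /= raddf_sum /=.
under eq_bigr => a _ do rewrite big_distrr raddf_sum /=.
under eq_bigr => a _ do under eq_bigr => b _ do rewrite pihomog_homM.
rewrite (big_ord_widen K (fun j => comp j p * comp (i - j)%N q)); last by rewrite /K; lia.
rewrite [in RHS]big_mkcond /=; apply: eq_bigr => a _.
case: (leqP (a : nat) i) => hai; rewrite ltnS ?hai; last by rewrite leqNgt hai big1 // => b _; rewrite ifF //; apply/negbTE/eqP; lia.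
  have hb : (i - a < K)%N by rewrite /K; lia.
  rewrite (bigD1 (Ordinal hb)) //= ifT; last by apply/eqP; lia.
  rewrite big1 ?addr0 //= => b hb'; rewrite ifF //; apply/negbTE.
  apply: contra hb' => /eqP hab; apply/eqP/val_inj => /=; lia.
Qed.
End Hom.

End M3.
Import M3.
Module M4.
Import GRing.Theory.

Definition pos D a i k t := (((a * D.+1 + i) * D.+1 + k) * D.+2 + t)%N.
Definition decode D p :=
  (p %/ D.+2 %/ D.+1 %/ D.+1, p %/ D.+2 %/ D.+1 %% D.+1, p %/ D.+2 %% D.+1, p %% D.+2).
Definition MM D := (D.+1 * D.+1 * D.+2)%N.

Lemma dm q m d : (m < d)%N -> ((q * d + m) %/ d = q /\ (q * d + m) %% d = m)%N.
Proof.
move=> h; have d0 : (0 < d)%N by case: d h.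
by rewrite divnMDl // divn_small // addn0 modnMDl modn_small.
Qed.

Lemma decode_pos D a i k t : (i <= D)%N -> (k <= D)%N -> (t <= D.+1)%N ->
  decode D (pos D a i k t) = (a, i, k, t).
Proof.
move=> hi hk ht; rewrite /decode /pos.
have [-> ->] := dm ((a * D.+1 + i) * D.+1 + k) (ht : t < D.+2)%N.
have [-> ->] := dm (a * D.+1 + i) (hk : k < D.+1)%N.
by have [-> ->] := dm a (hi : i < D.+1)%N.
Qed.

Lemma pos_decode D p : let: (a, i, k, t) := decode D p in
  [/\ p = pos D a i k t, (i <= D)%N, (k <= D)%N & (t <= D.+1)%N].
Proof.
rewrite /decode /pos; split; first by rewrite -!divn_eq.
- by rewrite -ltnS ltn_pmod.
- by rewrite -ltnS ltn_pmod.
- by rewrite -ltnS ltn_pmod.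
Qed.

Lemma qdm q q' d m : (q < q')%N -> (m < d)%N -> (q * d + m < q' * d)%N.
Proof.
move=> hq hm; apply: (@leq_trans (q.+1 * d)); first by rewrite mulSn addnC ltn_add2r.
by rewrite leq_mul2r hq orbT.
Qed.

Lemma pos_bound D a i k t : (i <= D)%N -> (k <= D)%N -> (t <= D.+1)%N ->
  (pos D a i k t < a.+1 * MM D)%N.
Proof.
move=> hi hk ht; rewrite /pos /MM !mulnA.
apply: qdm => //; apply: qdm => //; exact: qdm.
Qed.

Lemma pos_lt D s a i k t : (a < s)%N -> (i <= D)%N -> (k <= D)%N -> (t <= D.+1)%N ->
  (pos D a i k t < s * MM D)%N.
Proof.
move=> ha hi hk ht; apply: (leq_trans (pos_bound a hi hk ht)).
by rewrite leq_mul2r ha orbT.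
Qed.

Lemma pos_ge D a i k t : (a * MM D <= pos D a i k t)%N.
Proof.
rewrite /pos /MM !mulnA !mulnDl -!addnA; exact: leq_addr.
Qed.

Lemma pos_lt2 D a b i k t i' k' t' : (b < a)%N -> (i <= D)%N -> (k <= D)%N -> (t <= D.+1)%N ->
  (pos D b i k t < pos D a i' k' t')%N.
Proof.
move=> hb hi hk ht; apply: (leq_trans (pos_bound b hi hk ht)).
apply: leq_trans (pos_ge _ _ _ _ _); by rewrite leq_mul2r hb orbT.
Qed.

Lemma decode_lt D s p : (p < s * MM D)%N -> ((decode D p).1.1.1 < s)%N.
Proof.
rewrite /decode /MM /= -!divnMA => h.
rewrite ltn_divLR //; apply: leq_trans h _.
rewrite leq_eqVlt; apply/orP; left; apply/eqP; ring.
Qed.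

End M4.
Import M4.
Module M5.
Import GRing.Theory.

Section Constr.
Variable n : nat.
Variable c : circuit n.
Variable D : nat.

Definition gen a i k t : gate n :=
  if (D < i + k)%N then GConst n 0 else
  if t == D.+1 then
     match gate_at c a with
     | GVar x => if i == 1%N then GVar x else GConst n 0
     | GConst v => if i == 0%N then GConst n v else GConst n 0
     | GAdd l => GAdd n (map (fun b => pos D b i k D.+1) l)
     | GMul _ _ => GAdd n (map (fun j => pos D a i k j) (iota 0 i.+1))
     end
  else
     match gate_at c a with
     | GMul x y => if (t <= i)%N then
          GMul n (pos D x t k D.+1) (pos D y (i - t) (if (t < i)%N then k + t else k) D.+1)
          else GConst n 0
     | _ => GConst n 0
     end.

Definition genp p := let: (a, i, k, t) := decode D p in gen a i k t.
Definition NN := (size c * MM D)%N.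
Definition outg := GAdd n (map (fun i => pos D (size c).-1 i 0 D.+1) (iota 0 D.+1)).
Definition newc : circuit n := rcons (mkseq genp NN) outg.

Lemma size_newc : size newc = NN.+1.
Proof. by rewrite size_rcons size_mkseq. Qed.

Lemma gate_newc p : gate_at newc p =
  if (p < NN)%N then genp p else if p == NN then outg else GConst n 0.
Proof.
rewrite /gate_at /newc nth_rcons size_mkseq; case: ltnP => h; first by rewrite nth_mkseq.
by [].
Qed.

Definition dgf p := if (p < NN)%N then (decode D p).1.1.2 else D.
Definition offf p := if (p < NN)%N then (decode D p).1.2 else 0%N.

Lemma lab_pos a i k t : (a < size c)%N -> (i <= D)%N -> (k <= D)%N -> (t <= D.+1)%N ->
  dgf (pos D a i k t) = i /\ offf (pos D a i k t) = k.
Proof.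
move=> ha hi hk ht; rewrite /dgf /offf pos_lt // decode_pos //.
Qed.

End Constr.

End M5.
Import M5.
Module M6.
Import GRing.Theory.

Section Props.
Variable n : nat.
Variable c : circuit n.
Variable D : nat.
Hypothesis hwf : cwf c.
Hypothesis hs : (0 < size c)%N.

Notation NN := (NN c D).
Notation dgf := (dgf c D).
Notation offf := (offf c D).

Lemma genp_spec p : (p < NN)%N -> exists a i k t, [/\ p = pos D a i k t, (a < size c)%N,
  (i <= D)%N, (k <= D)%N & (t <= D.+1)%N].
Proof.
move=> hp; have := pos_decode D p; have := decode_lt hp.
rewrite /decode /= => ha [h hi hk ht].
by do 4 eexists; split; eauto.
Qed.

Lemma genp_pos a i k t : (i <= D)%N -> (k <= D)%N -> (t <= D.+1)%N ->
  genp c D (pos D a i k t) = gen c D a i k t.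
Proof. by move=> hi hk ht; rewrite /genp decode_pos. Qed.

Lemma gen_children a i k t j : (a < size c)%N -> (i <= D)%N -> (k <= D)%N -> (t <= D.+1)%N ->
  j \in children (gen c D a i k t) ->
  [/\ (j < pos D a i k t)%N, (j < NN)%N & lab_le dgf offf j (pos D a i k t)].
Proof.
move=> ha hi hk ht; rewrite /lab_le; have [-> ->] := lab_pos ha hi hk ht.
rewrite /gen; case: ltnP => hik //.
case: eqP => [et|net].
  have hwa := hwf ha.
  case E: (gate_at c a) hwa => [x|v|l|x y] hwa.
  - by case: ifP.
  - by case: ifP.
  - case/mapP => b hb ->.
    have hba : (b < a)%N by apply: hwa.
    have hbs : (b < size c)%N by apply: ltn_trans ha.
    have [-> ->] := lab_pos hbs hi hk (leqnn _).
    split; first exact: pos_lt2.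
      exact: pos_lt.
    split => //.
  - move=> /mapP [j' hj' ->]; move: hj'; rewrite mem_iota add0n => /andP [_ hj'].
    have hj'D : (j' <= D.+1)%N by lia.
    have [-> ->] := lab_pos ha hi hk hj'D.
    split; first by rewrite /pos ltn_add2l; lia.
      exact: pos_lt.
    split => //.
case E: (gate_at c a) => [x|v|l|x y] //=.
have hwa := hwf ha; rewrite E /= in hwa.
have hx : (x < a)%N by apply: hwa; rewrite !inE eqxx.
have hy : (y < a)%N by apply: hwa; rewrite !inE eqxx orbT.
have hxs : (x < size c)%N by apply: ltn_trans ha.
have hys : (y < size c)%N by apply: ltn_trans ha.
case: ifP => // hti; rewrite !inE => /orP [] /eqP ->.
  have hti' : (t <= D)%N by lia.
  have [-> ->] := lab_pos hxs hti' hk (leqnn _).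
  split; first exact: pos_lt2.
    exact: pos_lt.
  split; lia.
have h1 : (i - t <= D)%N by lia.
have h2 : ((if (t < i)%N then k + t else k) <= D)%N by case: ifP => _; lia.
have [-> ->] := lab_pos hys h1 h2 (leqnn _).
split; first exact: pos_lt2.
  exact: pos_lt.
case: ifP => hti2; split; lia.
Qed.
End Props.

End M6.
Import M6.
Module M7.
Import GRing.Theory.

Section Props2.
Variable n : nat.
Variable c : circuit n.
Variable D : nat.
Hypothesis hwf : cwf c.
Hypothesis hs : (0 < size c)%N.

Notation NN := (NN c D).
Notation dgf := (dgf c D).
Notation offf := (offf c D).
Notation newc := (newc c D).

Lemma newc_children p j : j \in children (gate_at newc p) ->
  (j < p)%N /\ lab_le dgf offf j p.
Proof.
rewrite gate_newc; case: ltnP => hp.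
  have [a [i [k [t [-> ha hi hk ht]]]]] := genp_spec hp.
  rewrite genp_pos // => /(gen_children hwf hs ha hi hk ht) [h1 _ h3]; by split.
case: eqP => [->|] //; rewrite /outg => /mapP [i hi ->]; move: hi; rewrite mem_iota add0n => /andP [_ hi].
have hs' : ((size c).-1 < size c)%N by rewrite prednK.
have hiD : (i <= D)%N by lia.
split; first exact: pos_lt.
rewrite /lab_le; have [-> ->] := lab_pos hs' hiD (leq0n _) (leqnn _).
rewrite /dgf /offf ltnn; split => //; lia.
Qed.

Lemma gen_GMul a i k t u v : gen c D a i k t = GMul n u v ->
  exists x y, [/\ gate_at c a = GMul n x y, (i + k <= D)%N, (t <= i)%N,
     u = pos D x t k D.+1 & v = pos D y (i - t) (if (t < i)%N then k + t else k) D.+1].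
Proof.
rewrite /gen; case: ltnP => // hik; case: eqP => ht.
  by case: (gate_at c a) => [x|v'|l|x y]; try case: ifP.
case E: (gate_at c a) => [x|v'|l|x y] //; case: ifP => // hti [<- <-].
by exists x, y; split.
Qed.

Lemma gen_var a i k t : is_var (gen c D a i k t) -> i = 1%N.
Proof.
rewrite /gen; case: ltnP => // hik; case: eqP => ht.
  case: (gate_at c a) => [x|v'|l|x y] //; case: ifP => // /eqP //.
case E: (gate_at c a) => [x|v'|l|x y] //; by case: ifP.
Qed.

Lemma newc_almost_MD : almost_MD newc.
Proof.
apply: (@almost_MD_lab _ _ dgf offf).
- by move=> p j /newc_children [].
- move=> p; rewrite gate_newc; case: ltnP => hp; last by case: eqP.
  have [a [i [k [t [-> ha hi hk ht]]]]] := genp_spec hp.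
  rewrite genp_pos // => /gen_var hi1; subst i.
  by have [-> _] := lab_pos ha hi hk ht.
- move=> p u v; rewrite gate_newc; case: ltnP => hp; last by case: eqP.
  have [a [i [k [t [-> ha hi hk ht]]]]] := genp_spec hp.
  rewrite genp_pos // => /gen_GMul [x [y [E hik hti -> ->]]].
  have hwa := hwf ha; rewrite E in hwa.
  have hx : (x < size c)%N by apply: (ltn_trans (hwa x _) ha); rewrite !inE eqxx.
  have hy : (y < size c)%N by apply: (ltn_trans (hwa y _) ha); rewrite !inE eqxx orbT.
  have h1 : (i - t <= D)%N by lia.
  have h2 : ((if (t < i)%N then k + t else k) <= D)%N by case: ifP => _; lia.
  have h3 : (t <= D)%N by lia.
  have [-> ->] := lab_pos hx h3 hk (leqnn _).
  have [-> ->] := lab_pos hy h1 h2 (leqnn _).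
  case: ifP => hti2; [right; right | right; left]; lia.
Qed.

Lemma newc_wf : well_formed newc.
Proof.
apply/andP; split; first by rewrite size_newc.
apply/allP => p _; apply/allP => j /newc_children [] //.
Qed.

Lemma newc_cwf : cwf newc.
Proof. by move=> p _ j /newc_children []. Qed.

Lemma newc_cf : constant_free c -> constant_free newc.
Proof.
move=> hcf p _ v; rewrite gate_newc; case: ltnP => hp; last by case: eqP => // _ [<-]; left.
have [a [i [k [t [-> ha hi hk ht]]]]] := genp_spec hp.
rewrite genp_pos // /gen; case: ltnP => hik; first by case=> <-; left.
case: eqP => het.
  case E: (gate_at c a) => [x|v'|l|x y] //; case: ifP => // _ [] <-; try by left.
  exact: (hcf a ha _ E).
case E: (gate_at c a) => [x|v'|l|x y]; try (by case=> <-; left); by case: ifP => // _ [<-]; left.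
Qed.
End Props2.

End M7.
Import M7.
Module M8.
Import GRing.Theory.
Local Open Scope ring_scope.

Notation comp i p := (pihomog mdeg i p).

Lemma comp_C n (i : nat) (v : CC) : comp i (v%:MP : {mpoly CC[n]}) = if i == 0%N then v%:MP else 0.
Proof.
rewrite -alg_mpolyC linearZ /=.
case: eqP => [->|ne].
  by rewrite pihomog_dE // dhomog1.
by rewrite (pihomog_ne0 _ (@dhomog1 _ _ _)) ?scaler0 //; apply/eqP => /esym.
Qed.

Lemma comp_X n (i : nat) (x : 'I_n) : comp i ('X_x : {mpoly CC[n]}) = if i == 1%N then 'X_x else 0.
Proof. rewrite pihomogX -[Measure.sort _ _]/(mdeg (mnm1 x)) mdeg1 eq_sym //. Qed.

Lemma gate_val_add n (s : seq {mpoly CC[n]}) l : gate_val s (GAdd n l) = \sum_(j <- l) nth 0 s j.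
Proof. by []. Qed.

Lemma gate_val_mul n (s : seq {mpoly CC[n]}) a b : gate_val s (GMul n a b) = nth 0 s a * nth 0 s b.
Proof. by []. Qed.

Section Vals.
Variable n : nat.
Variable c : circuit n.
Variable D : nat.
Hypothesis hwf : cwf c.
Hypothesis hs : (0 < size c)%N.

Notation NN := (NN c D).
Notation newc := (newc c D).
Notation V := (circuit_vals c).
Notation V' := (circuit_vals newc).
Notation va a := (nth 0 V a).

Definition W a i k t : {mpoly CC[n]} :=
  if (D < i + k)%N then 0 else if t == D.+1 then comp i (va a) else
  match gate_at c a with
  | GMul x y => if (t <= i)%N then comp t (va x) * comp (i - t) (va y) else 0
  | _ => 0 end.

Lemma vals_newc p : (p < NN)%N -> forall a i k t, p = pos D a i k t -> (a < size c)%N ->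
  (i <= D)%N -> (k <= D)%N -> (t <= D.+1)%N -> nth 0 V' p = W a i k t.
Proof.
elim/ltn_ind: p => p IH hp a i k t hpe ha hi hk ht.
have IH' b i' k' t' : (b < size c)%N -> (i' <= D)%N -> (k' <= D)%N -> (t' <= D.+1)%N ->
   (pos D b i' k' t' < p)%N -> nth 0 V' (pos D b i' k' t') = W b i' k' t'.
  move=> hb hi' hk' ht' hlt; apply: IH => //; exact: pos_lt.
rewrite cvals_step; last (by rewrite size_newc ltnS ltnW); last exact: newc_cwf hwf hs.
rewrite gate_newc hp hpe genp_pos //.
have hva := cvals_step hwf ha.
rewrite /gen /W; case: ltnP => hik; first by rewrite /= mpolyC0.
case: eqP => het.
  case E: (gate_at c a) hva => [x|v|l|x y] ->; rewrite ?[gate_val _ (GVar _)]/= ?[gate_val _ (GConst _ _)]/=.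
  - by rewrite comp_X; case: ifP => _ //=; rewrite mpolyC0.
  - by rewrite comp_C; case: ifP.
  - rewrite gate_val_add big_map raddf_sum /=; apply: eq_big_seq => b hb.
    have hwa := hwf ha; rewrite E in hwa.
    have hba : (b < a)%N by apply: hwa.
    rewrite IH' //; first by rewrite /W ltnNge hik /= eqxx.
    + exact: ltn_trans ha.
    + by rewrite hpe het; apply: pos_lt2.
  - rewrite gate_val_add gate_val_mul big_map pihomogM.
    rewrite -(big_mkord xpredT (fun j => comp j (va x) * comp (i - j) (va y))).
    rewrite /index_iota subn0; apply: eq_big_seq => j; rewrite mem_iota add0n => /andP [_ hj].
    have hjD : (j <= D.+1)%N by lia.
    rewrite IH' //.
      rewrite /W ltnNge hik /= ifF ?E ?ifT //; first by lia.
    by rewrite hpe het /pos ltn_add2l; lia.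
case E: (gate_at c a) => [x|v|l|x y]; try by rewrite /= mpolyC0.
case: ifP => hti; last by rewrite /= mpolyC0.
have hwa := hwf ha; rewrite E in hwa.
have hx : (x < a)%N by apply: hwa; rewrite !inE eqxx.
have hy : (y < a)%N by apply: hwa; rewrite !inE eqxx orbT.
have hxs : (x < size c)%N by apply: ltn_trans ha.
have hys : (y < size c)%N by apply: ltn_trans ha.
have h1 : (i - t <= D)%N by lia.
have h2 : ((if (t < i)%N then k + t else k) <= D)%N by case: ifP => _; lia.
have h3 : (t <= D)%N by lia.
rewrite gate_val_mul !IH' //; last 2 first.
- by rewrite hpe; apply: pos_lt2.
- by rewrite hpe; apply: pos_lt2.
rewrite /W !eqxx.
rewrite ifF; last by apply/negbTE; rewrite -leqNgt; lia.
rewrite ifF; last by apply/negbTE; rewrite -leqNgt; case: ifP => _; lia.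
done.
Qed.

Lemma output_newc : (msize (va (size c).-1) <= D.+1)%N -> output newc = output c.
Proof.
move=> hm; rewrite /output size_newc /=.
rewrite cvals_step; last (by rewrite size_newc); last exact: newc_cwf hwf hs.
rewrite gate_newc ltnn eqxx /outg gate_val_add big_map.
have hs' : ((size c).-1 < size c)%N by rewrite prednK.
rewrite [in RHS](pihomog_partitionE (k:=D.+1) (mf:=mdeg) hm).
rewrite -(big_mkord xpredT (fun j => comp j (va (size c).-1))).
rewrite /index_iota subn0; apply: eq_big_seq => j; rewrite mem_iota add0n => /andP [_ hj].
have hjD : (j <= D)%N by lia.
rewrite (vals_newc _ (erefl _)) //; first by rewrite /W addn0 ltnNge hjD /= eqxx.
exact: pos_lt.
Qed.
End Vals.

End M8.
Import M8.
Module M9.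
Import GRing.Theory.

Lemma expn_monoL m n e : (m <= n)%N -> (m ^ e <= n ^ e)%N.
Proof. by case: e => [//|e] h; rewrite leq_exp2r. Qed.

Lemma poly_bound C e : exists K, forall n, (C * (n + 1) ^ e <= n ^ K + K)%N.
Proof.
exists (e.+1 + C * (C * 2 ^ e + 1) ^ e)%N => n.
case: n => [|n].
  rewrite add0n exp1n muln1; apply: leq_trans (leq_addl _ _); apply: leq_trans (leq_addl _ _).
  by rewrite leq_pmulr // expn_gt0 addn1.
have h2 : ((n.+1 + 1) ^ e <= 2 ^ e * n.+1 ^ e)%N.
  by rewrite -expnMn; apply: expn_monoL; lia.
case: (leqP (C * 2 ^ e) n.+1) => hn.
  apply: leq_trans (leq_addr _ _).
  apply: (@leq_trans (n.+1 ^ e.+1)); last by apply: leq_pexp2l => //; apply: leq_addr.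
  rewrite expnS; apply: (leq_trans (leq_mul (leqnn C) h2)).
  by rewrite mulnA leq_mul2r hn orbT.
apply: leq_trans (leq_addl _ _); apply: leq_trans (leq_addl _ _).
rewrite leq_mul2l; apply/orP; right; apply: expn_monoL; lia.
Qed.

Lemma nth_le_sum (T : Type) (s : seq T) (F : T -> nat) x0 a : F x0 = 0%N ->
  (F (nth x0 s a) <= \sum_(x <- s) F x)%N.
Proof.
move=> h0; elim: s a => [|x s IH] [|a] /=; rewrite ?h0 ?big_nil ?big_cons //.
  exact: leq_addr.
by apply: leq_trans (IH a) _; apply: leq_addl.
Qed.

Lemma sum_bound n (s : circuit n) B :
  (forall p, (p < size s)%N -> (size (children (gate_at s p)) <= B)%N) ->
  (\sum_(g <- s) size (children g) <= size s * B)%N.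
Proof.
elim: s => [|g s IH] H; first by rewrite big_nil.
rewrite big_cons mulSn; apply: leq_add; first exact: (H 0%N).
by apply: IH => p hp; apply: (H p.+1).
Qed.

Lemma children_le_csize n (c : circuit n) a : (size (children (gate_at c a)) <= csize c)%N.
Proof.
apply: leq_trans (leq_addl _ _); exact: (@nth_le_sum _ c (fun g => size (children g)) (GConst n 0) a).
Qed.

Section Size.
Variable n : nat.
Variable c : circuit n.
Variable D : nat.
Hypothesis hwf : cwf c.
Hypothesis hs : (0 < size c)%N.

Lemma gen_size a i k t : (i <= D)%N ->
  (size (children (gen c D a i k t)) <= D.+2 + csize c)%N.
Proof.
move=> hi; rewrite /gen; case: ltnP => // hik; case: eqP => ht.
  case E: (gate_at c a) => [x|v|l|x y]; try by case: ifP.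
    rewrite /= size_map; apply: leq_trans (leq_addl _ _).
    by have := children_le_csize c a; rewrite E.
  by rewrite /= size_map size_iota; lia.
case E: (gate_at c a) => [x|v|l|x y] //; case: ifP => //= _; lia.
Qed.

Lemma csize_newc : (csize (newc c D) <= (NN c D).+1 * (D.+3 + csize c))%N.
Proof.
rewrite /csize size_newc.
have -> : ((NN c D).+1 * (D.+3 + csize c) = (NN c D).+1 + (NN c D).+1 * (D.+2 + csize c))%N.
  by nia.

rewrite leq_add2l -size_newc; apply: sum_bound => p _.
rewrite gate_newc; case: ltnP => hp.
  have [a [i [k [t [-> ha hi hk ht]]]]] := genp_spec hp.
  by rewrite genp_pos // gen_size.
case: eqP => // _; rewrite /outg /= size_map size_iota; lia.
Qed.
End Size.

End M9.
Import M9.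
Module M10.
Import GRing.Theory.

Lemma arith1 s A D : (s <= A)%N ->
  ((s * MM D).+1 * (D.+3 + A) <= (A + D + 3) ^ 6)%N.
Proof.
move=> hsA; rewrite /MM; set Y := (A + D + 3)%N.
have hY : (2 <= Y)%N by rewrite /Y; lia.
have e6 : (Y ^ 6 = Y * Y * Y * Y * Y * Y)%N by rewrite /expn /=; ring.
rewrite e6.
have h1 : (s * (D.+1 * D.+1 * D.+2) <= Y * (Y * Y * Y))%N.
  apply: leq_mul; first by rewrite /Y; lia.
  by apply: leq_mul; [apply: leq_mul|]; rewrite /Y; lia.
have h2 : (D.+3 + A = Y)%N by rewrite /Y; lia.
rewrite h2; nia.
Qed.

Lemma arith2 A D k1 k2 n : (A <= n ^ k1 + k1)%N -> (D <= n ^ k2 + k2)%N ->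
  ((A + D + 3) ^ 6 <= (k1 + k2 + 5) ^ 6 * (n + 1) ^ ((k1 + k2) * 6))%N.
Proof.
move=> hA hD; set m := (k1 + k2)%N; set P := ((n + 1) ^ m)%N.
have hP1 : (n ^ k1 <= P)%N.
  apply: leq_trans (expn_monoL _ (leq_addr 1 n)) _; apply: leq_pexp2l; rewrite /m; lia.
have hP2 : (n ^ k2 <= P)%N.
  apply: leq_trans (expn_monoL _ (leq_addr 1 n)) _; apply: leq_pexp2l; rewrite /m; lia.
have hP0 : (1 <= P)%N by rewrite expn_gt0 addn1.
rewrite expnM -expnMn; apply: expn_monoL; rewrite -/P /m; nia.
Qed.

End M10.
Import M10.

Theorem lemma5p2 (f : forall n : nat, {mpoly CC[n]}) :
  (exists k : nat, forall n : nat, (mdegree (f n) <= n ^ k + k)%N) ->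
  (exists k : nat, forall n : nat, exists c : circuit n,
      constant_free c /\ computes c (f n) /\ (csize c <= n ^ k + k)%N) ->
  exists k : nat, forall n : nat, exists c : circuit n,
      constant_free c /\ almost_MD c /\ computes c (f n) /\ (csize c <= n ^ k + k)%N.
Proof.
move=> [k2 hdeg] [k1 hcirc].
have [K hK] := poly_bound ((k1 + k2 + 5) ^ 6) ((k1 + k2) * 6).
exists K => n.
have [c [hcf [[hwfc hout] hsz]]] := hcirc n.
set D := (n ^ k2 + k2)%N.
have hw := well_formedP hwfc.
have hs : (0 < size c)%N by case/andP: hwfc.
exists (newc c D); split; first exact: newc_cf.
split; first exact: newc_almost_MD.
split.
  split; first exact: newc_wf.
  rewrite output_newc //.
  have : (msize (output c) <= D.+1)%N.
    rewrite hout; have := hdeg n; rewrite /mdegree /D => h.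
    by apply: leq_trans (leqSpred _) _; rewrite ltnS.
  by [].
apply: leq_trans (csize_newc D hs) _.
have hsA : (size c <= csize c)%N by rewrite /csize leq_addr.
apply: leq_trans (arith1 _ hsA) _.
apply: leq_trans (arith2 hsz (leqnn D)) _.
exact: hK.
Qed.
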